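(* Let $d_L\geq2$ and let $\lambda=(\lambda_1,\dots,\lambda_{d_L})$ be a Young diagram, i.e. integers with $\lambda_1\geq\lambda_2\geq\cdots\geq\lambda_{d_L}=0$, labeling an irreducible representation of $U(d_L)$ of dimension $$D_\lambda=\prod_{1\leq i<j\leq d_L}\frac{\lambda_i-\lambda_j+j-i}{j-i}.$$ Then $$\binom{d_L-1+\lambda_1}{d_L-1}\leq D_\lambda,$$ the left side being the dimension of the symmetric representation with Young diagram $(\lambda_1,0,\dots,0)$. *)

(* Defs.v *)
From mathcomp Require Import all_boot all_order all_algebra.
Set Implicit Arguments. Unset Strict Implicit. Unset Printing Implicit Defensive.
Import Order.TTheory GRing.Theory Num.Theory.
Local Open Scope ring_scope.

(* Young diagram lam indexed 1..d (lam : nat -> nat, only lam 1 .. lam d matter). *)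
Definition weyl_dim (d : nat) (lam : nat -> nat) : rat :=
  \prod_(1 <= i < d.+1) \prod_(i.+1 <= j < d.+1)
    (((lam i)%:R - (lam j)%:R + j%:R - i%:R) / (j%:R - i%:R)).

Definition young_diagram (d : nat) (lam : nat -> nat) : Prop :=
  (forall i j : nat, (1 <= i)%N -> (i <= j)%N -> (j <= d)%N -> (lam j <= lam i)%N)
  /\ lam d = 0%N.

(* Main.v *)
Require Import Defs.
From mathcomp Require Import all_boot all_order all_algebra.
From mathcomp Require Import zify ring lra.
Import Order.TTheory GRing.Theory Num.Theory.
Local Open Scope ring_scope.
Definition F (lam : nat -> nat) (i j : nat) : rat :=
  (((lam i)%:R - (lam j)%:R + j%:R - i%:R) / (j%:R - i%:R)).

Lemma reindex d lam : weyl_dim d lam =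
  \prod_(1 <= k < d) \prod_(1 <= i < (d - k).+1) F lam i (i + k).
Proof.
rewrite /weyl_dim.
transitivity (\prod_(1 <= i < d.+1) \prod_(1 <= k < d.+1 | (i + k <= d)%N) F lam i (i + k)).
  apply: eq_bigr => i _.
  rewrite -[in LHS](add1n i) big_addn (big_nat_widen _ _ (d.+1)); last by lia.
  apply: eq_big => k.
    by apply/idP/idP; lia.
  by rewrite addnC.
rewrite (exchange_big_dep_nat (fun k => k < d)%N); last by move=> i k; lia.
rewrite (big_nat_widen _ d (d.+1)) //.
apply: eq_big => k; first by apply/idP/idP; lia.
move=> hk.
rewrite (big_nat_widen _ (d - k).+1 (d.+1)); last by lia.
apply: eq_bigl => i; move: hk; rewrite !andTb => hk; apply/idP/idP; lia.
Qed.
Lemma binprod (a m : nat) :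
  ('C(m + a, m))%:R = \prod_(1 <= k < m.+1) (((a + k)%:R / k%:R) : rat).
Proof.
elim: m => [|m IH]; first by rewrite bin0 big_geq.
rewrite big_nat_recr //= -IH.
have h := mul_bin_diag (m.+1 + a) m.
rewrite addSn /= in h.
have e : ('C((m + a).+1, m.+1))%:R = ((m + a).+1)%:R * ('C(m + a, m))%:R / (m.+1)%:R :> rat.
  by rewrite -natrM h natrM mulrC mulrA mulVf ?mul1r // pnatr_eq0.
rewrite addSn e addnS addnC.
rewrite mulrA; congr (_ / _); exact: mulrC.
Qed.
Lemma prod_ge (r : seq nat) (y : nat -> rat) :
  {in r, forall i, 0 <= y i} ->
  1 + \sum_(i <- r) y i <= \prod_(i <- r) (1 + y i).
Proof.
elim: r => [|x r IH] hy; first by rewrite !big_nil addr0.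
rewrite !big_cons.
have h0 : 0 <= y x by apply: hy; rewrite inE eqxx.
have hr : {in r, forall i, 0 <= y i} by move=> i hi; apply: hy; rewrite inE hi orbT.
have hS : 0 <= \sum_(i <- r) y i by rewrite big_seq; apply: sumr_ge0 => i /hr.
apply: (le_trans _ (ler_wpM2l _ (IH hr))); last by lra.
nra.
Qed.

Lemma sum_tel (d k : nat) (lam : nat -> nat)
  (mono : forall i j : nat, (1 <= i)%N -> (i <= j)%N -> (j <= d)%N -> (lam j <= lam i)%N)
  (hk : (1 <= k)%N) (n : nat) : (1 <= n)%N -> (n + k <= d)%N ->
  (lam 1%N)%:R - (lam (n+k)%N)%:R <= \sum_(1 <= i < n.+1) ((lam i)%:R - (lam (i+k)%N)%:R) :> rat.
Proof.
elim: n => [//|n IH] _ hnk.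
case: n IH hnk => [|n] IH hnk.
  by rewrite big_nat1.
rewrite big_nat_recr //=.
have := IH isT ltac:(lia).
have : (lam (n.+1 + k) <= lam n.+2)%N by apply: mono; lia.
rewrite -(ler_nat rat) => h1 h2.
rewrite addSn in h1 *. lra.
Qed.

Lemma G_ge (d k : nat) (lam : nat -> nat) (hlam : young_diagram d lam)
  (hk : (1 <= k)%N) (hkd : (k < d)%N) :
  ((lam 1%N + k)%:R / k%:R) <= \prod_(1 <= i < (d - k).+1) F lam i (i + k).
Proof.
case: hlam => mono hd.
have kpos : (k%:R : rat) != 0 by rewrite pnatr_eq0; lia.
have eF : forall i, F lam i (i + k) = 1 + ((lam i)%:R - (lam (i+k)%N)%:R) / k%:R.
  move=> i; rewrite /F natrD.
  have -> : (i%:R + k%:R - i%:R : rat) = k%:R by ring.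
  have -> : ((lam i)%:R - (lam (i + k))%:R + (i%:R + k%:R) - i%:R : rat)
    = ((lam i)%:R - (lam (i + k))%:R) + k%:R by ring.
  by rewrite mulrDl divff // addrC.
rewrite (eq_bigr _ (fun i _ => eF i)).
have hy : {in index_iota 1 (d - k).+1, forall i, 0 <= ((lam i)%:R - (lam (i+k)%N)%:R) / (k%:R : rat)}.
  move=> i; rewrite mem_index_iota => /andP [h1 h2].
  apply: divr_ge0; last by apply: ler0n.
  rewrite subr_ge0 ler_nat; apply: mono; lia.
have P := prod_ge _ _ hy.
apply: le_trans P.
  rewrite -mulr_suml.
  have := @sum_tel d k lam mono hk (d - k) ltac:(lia) ltac:(lia).
  rewrite subnK ?hd; last by lia.
  move=> hs.
rewrite natrD mulrDl divff // addrC lerD2l.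
  rewrite subr0 in hs.
  by rewrite ler_pM2r // invr_gt0 ltr0n; lia.
Qed.

Theorem lemma7 (d : nat) (lam : nat -> nat) (hd : (2 <= d)%N)
  (hlam : young_diagram d lam) :
  ('C(d.-1 + lam 1%N, d.-1))%:R <= weyl_dim d lam.
Proof.
rewrite reindex binprod prednK; last by lia.
rewrite big_seq_cond [X in _ <= X]big_seq_cond.
apply: ler_prod => k; rewrite andbT mem_index_iota => /andP [h1 h2].
apply/andP; split.
  by apply: divr_ge0; apply: ler0n.
exact: G_ge.
Qed.
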